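(* Let $\Gamma=(a_1,\dots,a_m)\in\mathbb{Z}^m$ be a multiset of integers with $a_i=1$ for some $i$. For $n\ge1$ let $\Gamma_n=(k_1,\dots,k_m)$ with $k_i=a_i \bmod n$, viewed as a multiset in $\mathbb{Z}_n$. Then there exists a positive integer $N=N(\Gamma)$ such that for every $n>N$ and every $v\in\mathbb{Z}_n$: if $v\Gamma_n=\Gamma_n$ as multisets, then $v\in\{-1,0,1\}$ (in $\mathbb{Z}_n$).
   Context: For $v\in\mathbb{Z}_n$, $v\Gamma_n$ denotes the multiset $(vk_1,\dots,vk_m)$ with multiplication in $\mathbb{Z}_n$. *)

(* Defs.v *)
From mathcomp Require Import all_boot all_order all_algebra.
Set Implicit Arguments. Unset Strict Implicit. Unset Printing Implicit Defensive.
Import GRing.Theory.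
Local Open Scope ring_scope.

(* Gamma_n : the multiset (a_1 mod n, ..., a_m mod n) in Z_n, as a sequence
   (multiset equality is perm_eq). Only meaningful for n >= 2. *)
Definition Gamma_mod (n : nat) (Gamma : seq int) : seq 'Z_n :=
  [seq (a%:~R : 'Z_n) | a <- Gamma].

Definition scale_mset (n : nat) (v : 'Z_n) (s : seq 'Z_n) : seq 'Z_n :=
  [seq v * k | k <- s].

(* Main.v *)
Require Import Defs.
From mathcomp Require Import all_boot all_order all_algebra.
From mathcomp Require Import zify.
Import GRing.Theory Num.Theory.
Local Open Scope ring_scope.

Lemma Zp_int0 (n : nat) (z : int) : (1 < n)%N -> (`|z| < n)%N ->
  (z%:~R : 'Z_n) = 0 -> z = 0.
Proof.
move=> n1 hz; case: z hz => k /= hk.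
  move=> /(congr1 val); rewrite [LHS](val_Zp_nat n1) modn_small //= => ->. by [].
rewrite NegzE mulrNz => /eqP; rewrite oppr_eq0 => /eqP.
move=> /(congr1 val); rewrite [LHS](val_Zp_nat n1) modn_small //=.
Qed.

Lemma max_attained (s : seq int) : s != [::] ->
  exists2 a, a \in s & \max_(x <- s) `|x|%N = `|a|%N.
Proof.
elim: s => [//|x s IH] _.
rewrite big_cons.
case: s IH => [|y s] IH.
  by exists x; rewrite ?mem_head // big_nil maxn0.
have [a ha ea] := IH isT.
case: (leqP `|x|%N (\max_(z <- y :: s) `|z|%N)) => h.
  by exists a => //; rewrite in_cons ha orbT.
by exists x => //; rewrite mem_head.
Qed.

Theorem lemma3 (Gamma : seq int) :
  (1 \in Gamma) ->
  exists N : nat, (0 < N)%N /\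
    forall n : nat, (N < n)%N ->
    forall v : 'Z_n,
      perm_eq (scale_mset v (Gamma_mod n Gamma)) (Gamma_mod n Gamma) ->
      v \in [:: -1; 0; 1].
Proof.
move=> h1.
set M := \max_(x <- Gamma) `|x|%N.
have hM : forall a, a \in Gamma -> (`|a| <= M)%N.
  by move=> a ha; rewrite /M (big_rem a ha) /= leq_maxl.
have M1 : (1 <= M)%N by have := hM _ h1.
exists (M * M + M).+1; split => // n hn v hp.
have n1 : (1 < n)%N by lia.
have mem : forall x, x \in Gamma -> v * x%:~R \in Gamma_mod n Gamma.
  move=> x hx; rewrite -(perm_mem hp); apply: map_f; exact: map_f.
have /mapP [c hc ev] : v \in Gamma_mod n Gamma by have := mem _ h1; rewrite mulr1.
subst v.
have [a ha ea] : exists2 a, a \in Gamma & M = `|a|%N by apply: max_attained; case: (Gamma) h1.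
have /mapP [b hb eb] := mem _ ha.
have hb' := hM _ hb. have hc' := hM _ hc.
have e : c * a - b = 0.
  apply: (@Zp_int0 n (c * a - b) n1).
    have h4 : (`|(c * a)%R| <= M * M)%N by rewrite abszM leq_mul // -ea.
    lia.
  by rewrite intrB intrM eb subrr.
have hle : (`|c| * M <= M)%N.
  by rewrite ea -abszM; move/eqP: e; rewrite subr_eq0 => /eqP ->; rewrite -ea.
have : (`|c| <= 1)%N.
  by rewrite -(leq_pmul2r M1) mul1n.
clear -M1; case: c => [[|[|k]]|[|k]] //= _; rewrite ?inE ?eqxx ?orbT //.
Qed.
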